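(* For $k\ge1$ let $\mu_{2k+5}$ be the permutation of $[2k+5]$ given as the sequence $$\mu_{2k+5}=2k+2,\ 2k+5,\ 2k+4,\ \underbrace{2k,\ 2k+3,\ 2k-2,\ 2k+1,\ \dots,\ 6,\ 9,\ 4,\ 7}_{\text{pairs }(2j,\,2j+3)\text{ for } j=k,k-1,\dots,2},\ 1,\ 5,\ 3,\ 2,$$ so that $\mu_7=4,7,6,1,5,3,2$, $\mu_9=6,9,8,4,7,1,5,3,2$, $\mu_{11}=8,11,10,6,9,4,7,1,5,3,2$. Let $U=\{\mu_7,\mu_9,\mu_{11},\dots\}$. Then $U$ is an antichain with respect to $\prec$. Moreover, $\{123,3214,2143,15432\}\cup U$ is an antichain with respect to $\prec$.
   Context: $\pi\prec\rho$ means $\rho$ (as a sequence) has a subsequence order-isomorphic to $\pi$ (same relative order of entries). Permutations like $3214$ are written in one-line notation. An antichain is a set of pairwise $\prec$-incomparable permutations. *)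

(* Defs.v *)
From mathcomp Require Import all_boot.
Set Implicit Arguments. Unset Strict Implicit. Unset Printing Implicit Defensive.

Definition order_iso (s t : seq nat) : Prop :=
  size s = size t /\
  forall i j, i < size s -> j < size s ->
    (nth 0 s i < nth 0 s j) = (nth 0 t i < nth 0 t j).

Definition contains (pi rho : seq nat) : Prop :=
  exists m : bitseq, size m = size rho /\ order_iso pi (mask m rho).

Definition antichain (A : seq nat -> Prop) : Prop :=
  forall p q, A p -> A q -> p <> q -> ~ contains p q.

Definition mu (k : nat) : seq nat :=
  [:: 2*k+2; 2*k+5; 2*k+4] ++
  flatten [seq [:: 2*j; 2*j+3] | j <- rev (iota 2 (k.-1))] ++
  [:: 1; 5; 3; 2].

Definition U (s : seq nat) : Prop := exists k, 1 <= k /\ s = mu k.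

Definition extU (s : seq nat) : Prop :=
  s \in [:: [:: 1;2;3]; [:: 3;2;1;4]; [:: 2;1;4;3]; [:: 1;5;4;3;2]] \/ U s.

Example mu_check1 : mu 1 = [:: 4;7;6;1;5;3;2]. Proof. by []. Qed.
Example mu_check2 : mu 2 = [:: 6;9;8;4;7;1;5;3;2]. Proof. by []. Qed.
Example mu_check3 : mu 3 = [:: 8;11;10;6;9;4;7;1;5;3;2]. Proof. by []. Qed.

(* Main.v *)
Require Import Defs.
From mathcomp Require Import all_boot zify.

Lemma mu_succ l : 0 < l ->
  mu l.+1 = [:: 2*l+4; 2*l+7; 2*l+6; 2*l+2; 2*l+5] ++ drop 3 (mu l).
Proof.
case: l => // l _; rewrite /mu (_ : iota 2 l.+2.-1 = iota 2 l ++ [:: 2 + l]); last by rewrite (_ : l.+2.-1 = l + 1) ?iotaD //; lia. rewrite rev_cat /=.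






rewrite drop0; congr [:: _, _, _, _, _ & _]; lia. 
Qed.

Lemma size_mu l : 0 < l -> size (mu l) = 2*l+5.
Proof.
elim: l => // -[|l] IH _; first by [].
rewrite mu_succ // size_cat size_drop IH //=. lia.
Qed.

Definition muv l i v :=
  (i = 0 /\ v = 2*l+2) \/ (i = 1 /\ v = 2*l+5) \/ (i = 2 /\ v = 2*l+4) \/
  (exists m, [/\ i = 2*m+3, i < 2*l+1 & v = 2*l-2*m]) \/
  (exists m, [/\ i = 2*m+4, i <= 2*l & v = 2*l+3-2*m]) \/
  (i = 2*l+1 /\ v = 1) \/ (i = 2*l+2 /\ v = 5) \/ (i = 2*l+3 /\ v = 3) \/
  (i = 2*l+4 /\ v = 2).

Lemma mu_nth l i : 0 < l -> i < 2*l+5 -> muv l i (nth 0 (mu l) i).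
Proof.
elim: l i => // -[|l] IH i _ Hi.
  do 7 (case: i Hi => [|i] Hi; first by rewrite /muv /=; lia).
  lia.
case: (ltnP i 5) => Hi5.
  rewrite mu_succ //.
  do 3 (case: i Hi Hi5 => [|i] Hi Hi5; first by rewrite /muv /=; lia).
  case: i Hi Hi5 => [|i] Hi Hi5.
    by rewrite /muv /=; do 3 right; left; exists 0; split; lia.
  case: i Hi Hi5 => [|i] Hi Hi5.
    by rewrite /muv /=; do 4 right; left; exists 0; split; lia.
  lia.
have -> : nth 0 (mu l.+2) i = nth 0 (mu l.+1) (3 + (i - 5)).
  by rewrite mu_succ // nth_cat /= ltnNge Hi5 /= nth_drop.
have H := IH (3 + (i - 5)) isT ltac:(lia).
rewrite /muv in H *.
case: H => [[? ?]|[[? ?]|[[? ?]|[[m [? ? ?]]|[[m [? ? ?]]|[[? ?]|[[? ?]|[[? ?]|[? ?]]]]]]]]]; try lia.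
- do 3 right; left; exists (m+1); split; lia.
- do 4 right; left; exists (m+1); split; lia.
Qed.

Definition AdjS (s : seq nat) a b :=
  (a < b /\ b < size s /\ nth 0 s a < nth 0 s b) \/
  (b < a /\ a < size s /\ nth 0 s b < nth 0 s a).

Definition spine l x := x = 0 \/ (3 <= x /\ x <= 2*l+2).
Definition sig x := x + 2 * odd x - 3.

Definition adjR l a b :=
  (a = 0 /\ (b = 1 \/ b = 2)) \/ (b = 0 /\ (a = 1 \/ a = 2)) \/
  (a = 2*l+1 /\ (b = 2*l+3 \/ b = 2*l+4)) \/ (b = 2*l+1 /\ (a = 2*l+3 \/ a = 2*l+4)) \/
  (spine l a /\ spine l b /\ (sig a = sig b + 1 \/ sig b = sig a + 1)).

Definition muvS l i v :=
  (i = 0 /\ v = 2*l+2 /\ sig i = 0) \/ (i = 1 /\ v = 2*l+5 /\ sig i = 0) \/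
  (i = 2 /\ v = 2*l+4 /\ sig i = 0) \/
  (exists m, [/\ i = 2*m+3, i < 2*l+1, v = 2*l-2*m & sig i = 2*m+2]) \/
  (exists m, [/\ i = 2*m+4, i <= 2*l, v = 2*l+3-2*m & sig i = 2*m+1]) \/
  (i = 2*l+1 /\ v = 1 /\ sig i = 2*l) \/ (i = 2*l+2 /\ v = 5 /\ sig i = 2*l-1) \/
  (i = 2*l+3 /\ v = 3 /\ sig i = 2*l+2) \/ (i = 2*l+4 /\ v = 2 /\ sig i = 2*l+1).

Ltac muvcase H := case: H => [[? ?]|[[? ?]|[[? ?]|[[? [? ? ?]]|[[? [? ? ?]]|[[? ?]|[[? ?]|[[? ?]|[? ?]]]]]]]]].
Ltac muvScase H := case: H => [[? [? ?]]|[[? [? ?]]|[[? [? ?]]|[[? [? ? ? ?]]|[[? [? ? ? ?]]|[[? [? ?]]|[[? [? ?]]|[[? [? ?]]|[? [? ?]]]]]]]]]].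

Lemma mu_nthS l i : 0 < l -> i < 2*l+5 -> muvS l i (nth 0 (mu l) i).
Proof.
move=> l0 il; have := mu_nth l i l0 il; rewrite /muv /muvS.
move: (nth 0 _ _) => v.
case => [[? ?]|[[? ?]|[[? ?]|[[m [? ? ?]]|[[m [? ? ?]]|[[? ?]|[[? ?]|[[? ?]|[? ?]]]]]]]]]; subst.
- by left; rewrite /sig; split=> //; split=> //.
- by right; left; rewrite /sig; split=> //; split=> //.
- by do 2 right; left; rewrite /sig; split=> //; split=> //.
- by do 3 right; left; exists m; split=> //; rewrite /sig; lia.
- by do 4 right; left; exists m; split=> //; rewrite /sig; lia.
- by do 5 right; left; rewrite /sig; lia.
- by do 6 right; left; rewrite /sig; lia.
- by do 7 right; left; rewrite /sig; lia.
- by do 8 right; rewrite /sig; lia.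
Qed.

Ltac solve_case := first [ exfalso; lia | split => H; [ first [ left; lia | right; left; lia | do 2 right; left; lia | do 3 right; left; lia | do 4 right; lia | exfalso; lia ] | lia ] ].

Lemma adj_lt l a b : 0 < l -> a < b -> b < 2*l+5 ->
  (nth 0 (mu l) a < nth 0 (mu l) b) <-> adjR l a b.
Proof.
move=> l0 ab bl.
have Ha := mu_nthS l a l0 (ltn_trans ab bl); have Hb := mu_nthS l b l0 bl.
rewrite /muvS in Ha Hb; rewrite /adjR /spine.
set va := nth 0 (mu l) a in Ha *; set vb := nth 0 (mu l) b in Hb *.
muvScase Ha; muvScase Hb; solve_case.
Qed.

Lemma adjP l a b : 0 < l -> AdjS (mu l) a b <-> adjR l a b.
Proof.
move=> l0; rewrite /AdjS size_mu //.
case: (ltngtP a b) => ab.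
- have H := adj_lt l a b l0 ab; split.
    case=> [[_ [H1 H2]]|]; [exact/(H H1)|lia].
  move=> H1. have bl : b < 2*l+5 by move: H1; rewrite /adjR /spine /sig; lia.
  by left; split=> //; split=> //; apply/(H bl).
- have H := adj_lt l b a l0 ab; split.
    case=> [|[_ [H1 H2]]]; [lia| have := (H H1).1 H2; rewrite /adjR /spine; lia].
  move=> H1. have al : a < 2*l+5 by move: H1; rewrite /adjR /spine /sig; lia.
  right; split=> //; split=> //; apply/(H al); move: H1; rewrite /adjR /spine; lia.
- subst; rewrite /adjR /spine; split; first lia.
  move=> H; exfalso; move: H; lia.
Qed.

Lemma sig_inj l x y : spine l x -> spine l y -> sig x = sig y -> x = y.
Proof. rewrite /spine /sig; lia. Qed.
Lemma sig0 : sig 0 = 0. Proof. by []. Qed.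
Lemma sigB l : 0 < l -> sig (2*l+1) = 2*l. Proof. rewrite /sig; lia. Qed.
Lemma sigB2 l : 0 < l -> sig (2*l+2) = 2*l-1. Proof. rewrite /sig; lia. Qed.
Lemma sig_le l x : spine l x -> sig x <= 2*l. Proof. rewrite /spine /sig; lia. Qed.
Lemma spine0 l : spine l 0. Proof. by left. Qed.
Lemma spineB l : 0 < l -> spine l (2*l+1). Proof. rewrite /spine; lia. Qed.
Lemma spineB2 l : 0 < l -> spine l (2*l+2). Proof. rewrite /spine; lia. Qed.

Lemma nbr_int l a b : 0 < l -> AdjS (mu l) a b -> a <> 0 -> a <> 2*l+1 ->
  [\/ (a = 1 \/ a = 2) /\ b = 0, (a = 2*l+3 \/ a = 2*l+4) /\ b = 2*l+1 |
      [/\ 3 <= a <= 2*l+2, spine l b & sig b = sig a + 1 \/ sig a = sig b + 1]].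
Proof.
move=> l0 /(adjP l _ _ l0); rewrite /adjR => H an ab.
case: H => [|[|[|[|[Sa [Sb Hs]]]]]]; try (move=> ?; exfalso; lia).
- move=> [? ?]; apply: Or31; lia.
- move=> [? ?]; apply: Or32; lia.
- apply: Or33; split=> //; move: Sa; rewrite /spine; lia.
Qed.

Ltac nbr_cases H := case: H => [[H1 H2]|[H1 H2]|[H1 H2 H3]].

Lemma deg3 l a b1 b2 b3 : 0 < l ->
  AdjS (mu l) a b1 -> AdjS (mu l) a b2 -> AdjS (mu l) a b3 ->
  b1 <> b2 -> b1 <> b3 -> b2 <> b3 -> a = 0 \/ a = 2*l+1.
Proof.
move=> l0 A1 A2 A3 n12 n13 n23.
case: (eqVneq a 0) => [->|a0]; first by left.
case: (eqVneq a (2*l+1)) => [->|a1]; first by right.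
have a0' : a <> 0 by apply/eqP.
have a1' : a <> 2*l+1 by apply/eqP.
have := nbr_int l a b1 l0 A1 a0' a1'.
have := nbr_int l a b2 l0 A2 a0' a1'.
have := nbr_int l a b3 l0 A3 a0' a1'.
case=> [[? ?]|[? ?]|[? S3 E3]]; case=> [[? ?]|[? ?]|[? S2 E2]];
  case=> [[? ?]|[? ?]|[? S1 E1]]; try (exfalso; lia).
have : sig b1 = sig b2 \/ sig b1 = sig b3 \/ sig b2 = sig b3 by lia.
case=> [/(sig_inj l b1 b2 S1 S2)|[/(sig_inj l b1 b3 S1 S3)|/(sig_inj l b2 b3 S2 S3)]]; done.
Qed.

Lemma deg2 l a b1 b2 : 0 < l ->
  AdjS (mu l) a b1 -> AdjS (mu l) a b2 -> b1 <> b2 -> spine l a.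
Proof.
move=> l0 A1 A2 n12.
case: (eqVneq a 0) => [->|a0]; first by left.
case: (eqVneq a (2*l+1)) => [->|a1]; first by rewrite /spine; lia.
have a0' : a <> 0 by apply/eqP.
have a1' : a <> 2*l+1 by apply/eqP.
have := nbr_int l a b1 l0 A1 a0' a1'.
have := nbr_int l a b2 l0 A2 a0' a1'.
case=> [[? ?]|[? ?]|[? S2 E2]]; case=> [[? ?]|[? ?]|[? S1 E1]]; try (exfalso; lia);
  rewrite /spine; lia.
Qed.

Lemma adj_spine l a b : 0 < l -> spine l a -> spine l b -> AdjS (mu l) a b ->
  sig a = sig b + 1 \/ sig b = sig a + 1.
Proof.
move=> l0 Sa Sb /(adjP l _ _ l0); rewrite /adjR.
case=> [|[|[|[|[_ [_ H]]]]]] //; move: Sa Sb; rewrite /spine; lia.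
Qed.

Lemma nbr0 l b : 0 < l -> AdjS (mu l) 0 b -> b = 1 \/ b = 2 \/ (spine l b /\ sig b = 1).
Proof.
move=> l0 /(adjP l _ _ l0); rewrite /adjR sig0.
case=> [|[|[|[|[_ [Sb H]]]]]]; try lia.
right; right; split=> //; lia.
Qed.

Lemma nbrB l b : 0 < l -> AdjS (mu l) (2*l+1) b -> b = 2*l+3 \/ b = 2*l+4 \/ b = 2*l+2.
Proof.
move=> l0 /(adjP l _ _ l0); rewrite /adjR (sigB l l0).
case=> [|[|[|[|[_ [Sb H]]]]]]; try lia.
have := sig_le l b Sb.
have := sig_inj l b (2*l+2) Sb (spineB2 l l0).
rewrite (sigB2 l l0); lia.
Qed.

Ltac inj_tac l :=
  match goal with
  | Sx : spine l ?x, Sy : spine l ?y, Ex : sig ?x = ?c, Ey : sig ?y = ?c |- _ =>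
      have := sig_inj l x y Sx Sy (etrans Ex (esym Ey)); lia
  end.

Lemma no_deg4 l a b1 b2 b3 b4 : 0 < l ->
  AdjS (mu l) a b1 -> AdjS (mu l) a b2 -> AdjS (mu l) a b3 -> AdjS (mu l) a b4 ->
  b1 <> b2 -> b1 <> b3 -> b1 <> b4 -> b2 <> b3 -> b2 <> b4 -> b3 <> b4 -> False.
Proof.
move=> l0 A1 A2 A3 A4 n12 n13 n14 n23 n24 n34.
case: (deg3 l a b1 b2 b3 l0 A1 A2 A3 n12 n13 n23) => ?; subst.
- have := nbr0 l b1 l0 A1; have := nbr0 l b2 l0 A2; have := nbr0 l b3 l0 A3;
  have := nbr0 l b4 l0 A4.
  case=> [?|[?|[S4 E4]]]; case=> [?|[?|[S3 E3]]]; case=> [?|[?|[S2 E2]]];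
    case=> [?|[?|[S1 E1]]]; try lia; inj_tac l.
- have := nbrB l b1 l0 A1; have := nbrB l b2 l0 A2; have := nbrB l b3 l0 A3;
  have := nbrB l b4 l0 A4; lia.
Qed.

Lemma no_deg3_left l a b1 b2 b3 : 0 < l ->
  AdjS (mu l) a b1 -> AdjS (mu l) a b2 -> AdjS (mu l) a b3 ->
  b1 <> b2 -> b1 <> b3 -> b2 <> b3 -> b1 < a -> False.
Proof.
move=> l0 A1 A2 A3 n12 n13 n23 lt1.
case: (deg3 l a b1 b2 b3 l0 A1 A2 A3 n12 n13 n23) => ?; subst; first lia.
have := nbrB l b1 l0 A1; lia.
Qed.

Lemma no_triangle l a b c : 0 < l ->
  AdjS (mu l) a b -> AdjS (mu l) b c -> AdjS (mu l) a c ->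
  a <> b -> b <> c -> a <> c -> False.
Proof.
move=> l0 Aab Abc Aac nab nbc nac.
have Sym : forall x y, AdjS (mu l) x y -> AdjS (mu l) y x.
  by move=> x y; rewrite /AdjS; lia.
have Sa := deg2 l a b c l0 Aab Aac nbc.
have Sb := deg2 l b a c l0 (Sym _ _ Aab) Abc nac.
have Sc := deg2 l c a b l0 (Sym _ _ Aac) (Sym _ _ Abc) nab.
have := adj_spine l a b l0 Sa Sb Aab; have := adj_spine l b c l0 Sb Sc Abc;
have := adj_spine l a c l0 Sa Sc Aac; lia.
Qed.

Lemma no_c4 l a b c d : 0 < l ->
  AdjS (mu l) a c -> AdjS (mu l) c b -> AdjS (mu l) b d -> AdjS (mu l) d a ->
  a <> b -> c <> d -> False.
Proof.
move=> l0 Aac Acb Abd Ada nab ncd.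
have Sym : forall x y, AdjS (mu l) x y -> AdjS (mu l) y x.
  by move=> x y; rewrite /AdjS; lia.
have Sa := deg2 l a c d l0 Aac (Sym _ _ Ada) ncd.
have Sb := deg2 l b c d l0 (Sym _ _ Acb) Abd ncd.
have Sc := deg2 l c a b l0 (Sym _ _ Aac) Acb nab.
have Sd := deg2 l d a b l0 Ada (Sym _ _ Abd) nab.
have := adj_spine l a c l0 Sa Sc Aac; have := adj_spine l c b l0 Sc Sb Acb;
have := adj_spine l b d l0 Sb Sd Abd; have := adj_spine l d a l0 Sd Sa Ada.
have := sig_inj l a b Sa Sb; have := sig_inj l c d Sc Sd; lia.
Qed.

Lemma walk (f : nat -> nat) N :
  (forall s t, s <= N -> t <= N -> f s = f t -> s = t) ->
  (forall s, s < N -> f s.+1 = f s + 1 \/ f s = f s.+1 + 1) ->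
  f 0 = 0 -> f N = N.
Proof.
move=> inj step f0.
suff H : forall s, s <= N -> f s = s /\ (s < N -> f s.+1 = s.+1) by case: (H N (leqnn N)).
elim=> [|s IH] Hs.
  split=> // H0; have := step 0 H0; lia.
have [fs fs1] := IH (ltnW Hs).
split; first exact: fs1 Hs.
move=> H1; have := step s.+1 H1; rewrite (fs1 Hs).
case=> E; first lia; have := inj s s.+2; lia.
Qed.

Definition tau s := if s == 0 then 0 else s + 1 + 2 * odd s.

Lemma tau_facts k s : 0 < k -> s <= 2*k ->
  [/\ spine k (tau s), sig (tau s) = s & tau s < 2*k+5].
Proof.
move=> k0 sk; rewrite /tau; case: eqP => [->|s0]; first by split=> //; [left|lia].
split; rewrite /spine /sig; lia.
Qed.

Lemma tau_inj s t : tau s = tau t -> s = t.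
Proof. rewrite /tau; case: eqP; case: eqP; lia. Qed.

Lemma AdjS_sym s a b : AdjS s a b -> AdjS s b a.
Proof. rewrite /AdjS; lia. Qed.

Lemma mask_emb (m : bitseq) (s : seq nat) : size m = size s ->
  exists g : nat -> nat, (forall i j, i < j -> j < size (mask m s) -> g i < g j) /\
   (forall i, i < size (mask m s) -> g i < size s /\ nth 0 (mask m s) i = nth 0 s (g i)).
Proof.
elim: s m => [|x s IH] [|b m] //=.
  by move=> _; exists id.
case=> /IH [g [Hm Hn]]; case: b => /=.
- exists (fun i => if i is i'.+1 then (g i').+1 else 0); split.
    by case=> [|i] [|j] //= ij jl; rewrite ltnS; apply: Hm.
  by case=> [|i] //= il; have [H1 H2] := Hn i il.
- exists (fun i => (g i).+1); split.
    by move=> i j ij jl; rewrite ltnS; apply: Hm.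
  by move=> i il; have [H1 H2] := Hn i il.
Qed.

Lemma contains_adj p q : contains p q ->
  exists g : nat -> nat, (forall i j, i < j -> j < size p -> g i < g j) /\
    (forall a b, AdjS p a b -> AdjS q (g a) (g b)).
Proof.
case=> m [Hm [Hs Ho]].
have [g [Gm Gn]] := mask_emb m q Hm.
exists g; split; first by move=> i j ij jl; apply: Gm; rewrite -?Hs.
move=> a b; rewrite /AdjS.
case=> [[ab [bs pab]]|[ba [al pba]]].
- left; split; first by apply: Gm; rewrite -?Hs.
  have bs' : b < size (mask m q) by rewrite -Hs.
  have as' : a < size (mask m q) by rewrite -Hs; apply: ltn_trans ab bs.
  have [gb nb] := Gn b bs'; have [ga na] := Gn a as'.
  split=> //; rewrite -na -nb -Ho //; exact: ltn_trans ab bs.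
- right; split; first by apply: Gm; rewrite -?Hs.
  have as' : a < size (mask m q) by rewrite -Hs.
  have bs' : b < size (mask m q) by rewrite -Hs; apply: ltn_trans ba al.
  have [gb nb] := Gn b bs'; have [ga na] := Gn a as'.
  split=> //; rewrite -na -nb -Ho //; exact: ltn_trans ba al.
Qed.

Lemma contains_size p q : contains p q -> size p <= size q.
Proof.
case=> m [Hm [Hs _]]; rewrite Hs size_mask // -Hm; exact: count_size.
Qed.

Lemma mu_not_in_mu k l : 0 < k -> k < l -> ~ contains (mu k) (mu l).
Proof.
move=> k0 kl /contains_adj [g [Gm Ga]].
have l0 : 0 < l by lia.
rewrite size_mu // in Gm.
have ginj : forall i j, i < 2*k+5 -> j < 2*k+5 -> g i = g j -> i = j.
  move=> i j il jl E; case: (ltngtP i j) => // ij.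
  - by have := Gm i j ij jl; rewrite E ltnn.
  - by have := Gm j i ij il; rewrite E ltnn.
have src : forall x y, adjR k x y -> AdjS (mu l) (g x) (g y).
  by move=> x y H; apply: Ga; apply/(adjP k x y k0).
pose w s := g (tau s).
have P : forall s, s < 2*k -> AdjS (mu l) (w s) (w s.+1).
  move=> s sk; apply: src; have [S1 E1 _] := tau_facts k s k0 (ltnW sk).
  have [S2 E2 _] := tau_facts k s.+1 k0 sk.
  do 4 right; split=> //; split=> //; lia.
have winj : forall s t, s <= 2*k -> t <= 2*k -> w s = w t -> s = t.
  move=> s t sk tk E; apply: tau_inj; apply: ginj => //.
    by case: (tau_facts k s k0 sk).
  by case: (tau_facts k t k0 tk).
have tau0 : tau 0 = 0 by [].
have tau1 : tau 1 = 4 by [].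
have tauN : tau (2*k) = 2*k+1 by rewrite /tau; case: eqP; lia.
have tauN1 : tau (2*k).-1 = 2*k+2 by rewrite /tau; case: eqP; lia.
have E0 : w 0 = 0 \/ w 0 = 2*l+1.
  have A1 : AdjS (mu l) (w 0) (g 1) by rewrite /w tau0; apply: src; rewrite /adjR; lia.
  have A2 : AdjS (mu l) (w 0) (g 2) by rewrite /w tau0; apply: src; rewrite /adjR; lia.
  have A3 := P 0 ltac:(lia).
  apply: (deg3 l (w 0) (g 1) (g 2) (w 1) l0 A1 A2 A3); rewrite /w ?tau1 => E.
  - by have := ginj 1 2; lia.
  - by have := ginj 1 4; lia.
  - by have := ginj 2 4; lia.
have EN : w (2*k) = 0 \/ w (2*k) = 2*l+1.
  have A1 : AdjS (mu l) (w (2*k)) (g (2*k+3)).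
    by rewrite /w tauN; apply: src; rewrite /adjR; lia.
  have A2 : AdjS (mu l) (w (2*k)) (g (2*k+4)).
    by rewrite /w tauN; apply: src; rewrite /adjR; lia.
  have A3 : AdjS (mu l) (w (2*k)) (w (2*k).-1).
    apply: AdjS_sym; have := P (2*k).-1 ltac:(lia).
    by rewrite (_ : (2*k).-1.+1 = 2*k) //; lia.
  apply: (deg3 l (w (2*k)) _ _ _ l0 A1 A2 A3); rewrite /w ?tauN1 => E.
  - by have := ginj (2*k+3) (2*k+4); lia.
  - by have := ginj (2*k+3) (2*k+2); lia.
  - by have := ginj (2*k+4) (2*k+2); lia.
have Sp : forall s, s <= 2*k -> spine l (w s).
  move=> s sk.
  case: (eqVneq s 0) => [->|s0].
    by case: E0 => ->; [left|apply: spineB].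
  case: (eqVneq s (2*k)) => [->|sN].
    by case: EN => ->; [left|apply: spineB].
  have A1 : AdjS (mu l) (w s) (w s.-1).
    apply: AdjS_sym; have := P s.-1 ltac:(lia).
    by rewrite (_ : s.-1.+1 = s) //; lia.
  have A2 := P s ltac:(lia).
  apply: (deg2 l (w s) _ _ l0 A1 A2) => E.
  have := winj s.-1 s.+1; lia.
pose f s := sig (w s).
have fstep : forall s, s < 2*k -> f s.+1 = f s + 1 \/ f s = f s.+1 + 1.
  move=> s sk; have := adj_spine l (w s) (w s.+1) l0 (Sp s (ltnW sk)) (Sp s.+1 sk) (P s sk).
  rewrite /f; lia.
have finj : forall s t, s <= 2*k -> t <= 2*k -> f s = f t -> s = t.
  move=> s t sk tk E; apply: winj => //; exact: (sig_inj l _ _ (Sp s sk) (Sp t tk) E).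
have n0N : w 0 <> w (2*k) by move=> E; have := winj 0 (2*k); lia.
case: E0 => H0.
- have := walk f (2*k) finj fstep; rewrite /f H0 sig0 => /(_ erefl).
  case: EN => HN; first by rewrite H0 HN in n0N.
  rewrite HN sigB //; lia.
- have HN : w (2*k) = 0 by case: EN => // HN; rewrite H0 HN in n0N.
  have := walk (fun s => f (2*k - s)) (2*k).
  have -> : 2*k - 2*k = 0 by lia.
  rewrite subn0 /f H0 HN sig0 sigB //.
  have Hi : forall s t, s <= 2*k -> t <= 2*k -> f (2*k - s) = f (2*k - t) -> s = t.
    move=> s t sk tk E; have := finj (2*k - s) (2*k - t); lia.
  have Hs : forall s, s < 2*k -> f (2*k - s.+1) = f (2*k - s) + 1 \/ f (2*k - s) = f (2*k - s.+1) + 1.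
    move=> s sk; have := fstep (2*k - s.+1) ltac:(lia).
    rewrite (_ : (2*k - s.+1).+1 = 2*k - s); lia.
  move=> /(_ Hi Hs erefl); lia.
Qed.

Lemma p123 l : 0 < l -> ~ contains [:: 1; 2; 3] (mu l).
Proof.
move=> l0 /contains_adj [g [Gm Ga]].
have A01 : AdjS [:: 1; 2; 3] 0 1 by left; repeat split.
have A12 : AdjS [:: 1; 2; 3] 1 2 by left; repeat split.
have A02 : AdjS [:: 1; 2; 3] 0 2 by left; repeat split.
have := Gm 0 1 isT isT; have := Gm 1 2 isT isT.
move=> h1 h2; apply: (no_triangle l (g 0) (g 1) (g 2) l0 (Ga _ _ A01) (Ga _ _ A12) (Ga _ _ A02)); lia.
Qed.

Lemma p3214 l : 0 < l -> ~ contains [:: 3; 2; 1; 4] (mu l).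
Proof.
move=> l0 /contains_adj [g [Gm Ga]].
have A0 : AdjS [:: 3; 2; 1; 4] 3 0 by right; repeat split.
have A1 : AdjS [:: 3; 2; 1; 4] 3 1 by right; repeat split.
have A2 : AdjS [:: 3; 2; 1; 4] 3 2 by right; repeat split.
have := Gm 0 1 isT isT; have := Gm 1 2 isT isT; have := Gm 2 3 isT isT.
move=> h1 h2 h3; apply: (no_deg3_left l (g 3) (g 0) (g 1) (g 2) l0 (Ga _ _ A0) (Ga _ _ A1) (Ga _ _ A2)); lia.
Qed.

Lemma p2143 l : 0 < l -> ~ contains [:: 2; 1; 4; 3] (mu l).
Proof.
move=> l0 /contains_adj [g [Gm Ga]].
have A02 : AdjS [:: 2; 1; 4; 3] 0 2 by left; repeat split.
have A21 : AdjS [:: 2; 1; 4; 3] 2 1 by right; repeat split.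
have A13 : AdjS [:: 2; 1; 4; 3] 1 3 by left; repeat split.
have A30 : AdjS [:: 2; 1; 4; 3] 3 0 by right; repeat split.
have := Gm 0 1 isT isT; have := Gm 2 3 isT isT.
move=> h1 h2; apply: (no_c4 l (g 0) (g 1) (g 2) (g 3) l0 (Ga _ _ A02) (Ga _ _ A21) (Ga _ _ A13) (Ga _ _ A30)); lia.
Qed.

Lemma p15432 l : 0 < l -> ~ contains [:: 1; 5; 4; 3; 2] (mu l).
Proof.
move=> l0 /contains_adj [g [Gm Ga]].
have A1 : AdjS [:: 1; 5; 4; 3; 2] 0 1 by left; repeat split.
have A2 : AdjS [:: 1; 5; 4; 3; 2] 0 2 by left; repeat split.
have A3 : AdjS [:: 1; 5; 4; 3; 2] 0 3 by left; repeat split.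
have A4 : AdjS [:: 1; 5; 4; 3; 2] 0 4 by left; repeat split.
have := Gm 1 2 isT isT; have := Gm 2 3 isT isT; have := Gm 3 4 isT isT.
move=> h1 h2 h3; apply: (no_deg4 l (g 0) (g 1) (g 2) (g 3) (g 4) l0 (Ga _ _ A1) (Ga _ _ A2) (Ga _ _ A3) (Ga _ _ A4)); lia.
Qed.

Fixpoint bitseqs n : seq bitseq :=
  if n is n'.+1 then [seq true :: m | m <- bitseqs n'] ++ [seq false :: m | m <- bitseqs n']
  else [:: [::]].

Lemma mem_bitseqs m : m \in bitseqs (size m).
Proof.
elim: m => [|b m IH] //=; rewrite mem_cat; case: b; apply/orP; [left|right];
  by apply/mapP; exists m.
Qed.

Definition order_isob (p t : seq nat) :=
  (size p == size t) && all (fun i => all (fun j =>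
     (nth 0 p i < nth 0 p j) == (nth 0 t i < nth 0 t j)) (iota 0 (size p))) (iota 0 (size p)).

Lemma order_isobP p t : order_iso p t -> order_isob p t.
Proof.
case=> Hs Ho; rewrite /order_isob Hs eqxx /=.
apply/allP => i; rewrite mem_iota => /andP[_ Hi]; apply/allP => j.
rewrite mem_iota => /andP[_ Hj]; rewrite Ho ?Hs //.
Qed.

Definition containsb p q := has (fun m => order_isob p (mask m q)) (bitseqs (size q)).

Lemma contains_b p q : contains p q -> containsb p q.
Proof.
case=> m [Hm Ho]; apply/hasP; exists m; first by rewrite -Hm mem_bitseqs.
exact: order_isobP.
Qed.

Lemma antiU : antichain U.
Proof.
move=> p q [k [k0 ->]] [l [l0 ->]] ne C.
case: (ltngtP k l) => kl.
- exact: (mu_not_in_mu k l k0 kl C).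
- have := contains_size (mu k) (mu l) C; rewrite !size_mu //; lia.
- by apply: ne; rewrite kl.
Qed.

Theorem mainTheorem9 : antichain U /\ antichain extU.
Proof.
split; first exact: antiU.
have small_size : forall p, p \in [:: [:: 1;2;3]; [:: 3;2;1;4]; [:: 2;1;4;3]; [:: 1;5;4;3;2]] -> size p <= 5.
  by move=> p; rewrite !inE => /or4P [] /eqP ->.
move=> p q Hp Hq ne C; case: Hp => Hp; case: Hq => Hq.
- move: Hp Hq ne C; rewrite !inE => /or4P [] /eqP -> /or4P [] /eqP -> //= _ /contains_b H;
  vm_compute in H; discriminate H.
- case: Hq => [l [l0 Eq]]; subst q; move: Hp C; rewrite !inE => /or4P [] /eqP ->.
  + exact: p123.
  + exact: p3214.
  + exact: p2143.
  + exact: p15432.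
- case: Hp => [k [k0 Ep]]; have := contains_size p q C; have := small_size _ Hq.
  rewrite Ep size_mu //; move=> h1 h2; have h3 := leq_trans h2 h1; lia.
- exact: (antiU p q Hp Hq ne C).
Qed.
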